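(* Let $N\subset\mathbb{N}$ be infinite and consider the subsequence $(\bar d_{\gamma_n})_{n\in N}$ of the basis $(\bar d_{\gamma_n})_{n\in\mathbb{N}}$ of $\mathfrak{X}_{\bar\Gamma}$. Then there exists an infinite set $M\subset N$ such that for no two $n,m\in M$ are the nodes $\gamma_n,\gamma_m$ neighbours.
   Context: Fix increasing sequences of positive integers $(m_k),(n_k),(l_k)$ tending to $\infty$ with $m_1=4$, $n_1=4$, $l_1=2$ and $m_km_{k-1}\le m_1^{l_k}$, $(n_{k-1}/m_{k-1})^{l_k}\le n_k/(m_{k-1}m_k)$ for all $k$. For each $q$ let $\mathrm{Net}_{1,q}$ be a finite symmetric $\frac{1}{4n_q^2}$-net of $[-1,1]$ containing $\pm1$. Construction of $\mathfrak{X}_{\bar\Gamma}$: finite sets of nodes $\bar\Delta_q$ are defined recursively, with $\bar\Gamma_q=\bar\Delta_1\cup\dots\cup\bar\Delta_q$; nodes are enumerated $(\gamma_n)_n$ so that each $\bar\Gamma_q$ is the initial interval $\{1,\dots,\#\bar\Gamma_q\}$ of $\mathbb N$ (so intervals of nodes make sense). For each $\gamma\in\bar\Delta_{q}$ one defines $\bar c^*_\gamma\in\ell_1(\bar\Gamma_{q-1})$ and $\bar d^*_\gamma=e^*_\gamma-\bar c^*_\gamma$, where $(e^*_\gamma)$ is the unit vector basis of $\ell_1$; then $\mathrm{span}\{\bar d^*_{\gamma_i}:i\le n\}=\mathrm{span}\{e^*_{\gamma_i}:i\le n\}$ for all $n$, and for an interval $I$ let $\bar P^*_I$ be the projection $\sum_n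 a_n\bar d^*_{\gamma_n}\mapsto\sum_{n\in I}a_n\bar d^*_{\gamma_n}$. Start with $\bar\Delta_1=\{1\}$, $\bar c^*_1=0$. Given $\bar\Delta_1,\dots,\bar\Delta_q$, the set $\bar\Delta_{q+1}$ consists of: (a) all tuples $\gamma=(q+1,0,m_j,I,\epsilon,\lambda e^*_\eta)$ with $1\le j\le q$, $I$ an interval in $\bar\Gamma_q$, $\epsilon\in\{\pm1\}$, $\lambda\in\mathrm{Net}_{1,q}$, $\eta\in\bar\Gamma_q$, $\bar P^*_I e^*_\eta\ne0$, $\lambda\neq 0$; for these $\bar c^*_\gamma=\frac{1}{m_j}\epsilon\lambda\bar P^*_Ie^*_\eta$, and we set $\mathrm{age}(\gamma)=1$; (b) all tuples $\gamma=(q+1,\xi,m_j,I,\epsilon,\lambda e^*_\eta)$ with $1\le p<q$, $1\le j\le p$, $\xi\in\bar\Delta_p$ of weight $m_j^{-1}$ and $\mathrm{age}(\xi)<n_j$, $\epsilon\in\{\pm1\}$, $\lambda\in\mathrm{Net}_{1,q}$, $\eta\in\bar\Gamma_q\setminus\bar\Gamma_p$, $I$ an interval in $\bar\Gamma_q\setminus\bar\Gamma_p$, $\bar P^*_I(\lambda e^*_\eta)\ne0$; for these $\bar c^*_\gamma=e^*_\xi+\frac1{m_j}\epsilon\lambda\bar P^*_Ie^*_\eta$ and $\mathrm{age}(\gamma)=\mathrm{age}(\xi)+1$. In both cases the weight of $\gamma$ is $w(\gamma)=m_j^{-1}$ and $\mathrm{rank}(\gamma)=q+1$. Let $\bar\Gamma=\bigcup_q\bar\Gamma_q$,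 let $\bar d_\gamma\in\ell_\infty(\bar\Gamma)$ be the vectors biorthogonal to $(\bar d^*_\delta)_\delta$ (i.e. $\bar d^*_\delta(\bar d_\gamma)=\delta_{\gamma\delta}$), and let $\mathfrak{X}_{\bar\Gamma}$ be their closed linear span in $\ell_\infty(\bar\Gamma)$ with the sup norm; $(\bar d_{\gamma_n})_n$ is a basis of $\mathfrak X_{\bar\Gamma}$. Evaluation analysis and neighbours: every node $\gamma\ne 1$ of weight $m_j^{-1}$ determines a unique chain $\xi_1,\dots,\xi_a=\gamma$ where $\xi_1$ has second coordinate $0$ and $\xi_i=(q_i+1,\xi_{i-1},m_j,\dots)$ for $1<i\le a$; the bd-part of $e^*_\gamma$ is $\sum_{i=1}^a\bar d^*_{\xi_i}$. Two nodes $\zeta,\zeta'$ are called neighbours if there is a node $\gamma$ whose chain $(\xi_i)_{i=1}^a$ satisfies $\zeta=\xi_{i_1}$, $\zeta'=\xi_{i_2}$ for some $i_1<i_2$. *)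

(* Defs.v *)
From HB Require Import structures.
From mathcomp Require Import all_boot all_order all_algebra.
From mathcomp Require Import reals.
Set Implicit Arguments. Unset Strict Implicit. Unset Printing Implicit Defensive.
Import Order.TTheory GRing.Theory Num.Theory.
Local Open Scope ring_scope.

(* Conventions:
   - the sequences m, n, l are indexed from 1 (values at 0 are irrelevant);
   - nodes are identified with their index in the enumeration, 0-based:
     node k (k : nat) is gamma_{k+1}; node 0 is the root (Delta_1 = {1});
   - S q = #Gamma_q, so Gamma_q = [0, S q) and Delta_{q+1} = [S q, S (q+1));
   - an interval I of nodes is [a, b] with a <= b (empty intervals can never
     satisfy the non-vanishing condition P*_I(lam e*_eta) <> 0);
   - vectors of l_1 with finite support are functions nat -> R, the
     coordinate i being the coefficient of e*_{gamma_i}. *)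

Definition params (R : realType) (m n l : nat -> nat) : Prop :=
  [/\ (forall k, (1 <= k)%N -> [/\ (0 < m k)%N, (0 < n k)%N & (0 < l k)%N]),
      (forall k, (1 <= k)%N -> [/\ (m k < m k.+1)%N, (n k < n k.+1)%N & (l k < l k.+1)%N]),
      [/\ m 1%N = 4%N, n 1%N = 4%N & l 1%N = 2%N],
      (forall k, (2 <= k)%N -> (m k * m k.-1 <= (m 1%N) ^ (l k))%N) &
      (forall k, (2 <= k)%N ->
         ((n k.-1)%:R / (m k.-1)%:R) ^+ (l k) <= (n k)%:R / ((m k.-1)%:R * (m k)%:R :> R))].

Definition nets (R : realType) (n : nat -> nat) (Net : nat -> seq R) : Prop :=
  forall q, (1 <= q)%N ->
    [/\ (forall x, x \in Net q -> -1 <= x <= 1),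
        (forall x, x \in Net q -> - x \in Net q),
        1 \in Net q, -1 \in Net q &
        (forall x : R, -1 <= x <= 1 ->
           exists2 y, y \in Net q & `|x - y| <= ((4 * (n q) ^ 2)%:R)^-1)].

(* The tuple gamma = (rank, xi or 0, m_j, I = [a,b], eps, lam e*_eta). *)
Record NodeData (R : Type) := MkNode {
  nd_rank : nat;
  nd_par  : option nat;   (* None = second coordinate 0; Some xi = xi *)
  nd_j    : nat;          (* weight m_j^{-1} *)
  nd_a    : nat;          (* interval I = [a, b] *)
  nd_b    : nat;
  nd_eps  : R;
  nd_lam  : R;
  nd_eta  : nat }.

Record Constr (R : Type) := MkConstr {
  S     : nat -> nat;              (* S q = #Gamma_q *)
  node  : nat -> NodeData R;       (* tuple of node k, k >= 1 *)
  age   : nat -> nat;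
  cstar : nat -> nat -> R;         (* cstar k = c*_{gamma_k} *)
  dexp  : nat -> nat -> R }.       (* e*_eta = sum_n dexp eta n * d*_n *)

Section Derived.
Variables (R : realType) (C : Constr R).

Definition dstar (k i : nat) : R := (k == i)%:R - cstar C k i.

(* P*_[a,b] e*_eta, written in the e*-coordinates *)
Definition projE (a b eta : nat) (i : nat) : R :=
  \sum_(a <= k < b.+1) dexp C eta k * dstar k i.

End Derived.

(* Admissible tuples forming Delta_{q+1}, for q >= 1: clauses (a) and (b). *)
Definition admissible (R : realType) (m n : nat -> nat) (Net : nat -> seq R)
    (C : Constr R) (q : nat) (t : NodeData R) : Prop :=
  let j := nd_j t in let a := nd_a t in let b := nd_b t in
  let eta := nd_eta t in let lam := nd_lam t in
  [/\ nd_rank t = q.+1, nd_eps t = 1 \/ nd_eps t = -1, lam \in Net q,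
      (fun i => lam * projE C a b eta i) <> (fun _ => 0) &
      match nd_par t with
      | None => [/\ (1 <= j <= q)%N, (a <= b)%N, (b < S C q)%N,
                    lam != 0 & (eta < S C q)%N]
      | Some xi =>
          exists p, [/\ (1 <= p < q)%N, (1 <= j <= p)%N,
                        (S C p.-1 <= xi < S C p)%N && (1 <= xi)%N,
                        nd_j (node C xi) = j & (age C xi < n j)%N] /\
                    [/\ (S C p <= eta < S C q)%N, (S C p <= a)%N,
                        (a <= b)%N & (b < S C q)%N]
      end].

Definition IsConstr (R : realType) (m n : nat -> nat) (Net : nat -> seq R)
    (C : Constr R) : Prop :=
  [/\ [/\ S C 0 = 0%N, S C 1 = 1%N & (forall q, (S C q <= S C q.+1)%N)],
      (* Delta_{q+1} = [S q, S (q+1)) is enumerated bijectively *)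
      (forall q, (1 <= q)%N ->
        [/\ (forall k, (S C q <= k < S C q.+1)%N -> admissible m n Net C q (node C k)),
            (forall t, admissible m n Net C q t ->
               exists2 k, (S C q <= k < S C q.+1)%N & node C k = t) &
            (forall k k', (S C q <= k < S C q.+1)%N -> (S C q <= k' < S C q.+1)%N ->
               node C k = node C k' -> k = k')]),
      (forall k, (1 <= k)%N ->
         age C k = match nd_par (node C k) with
                   | None => 1%N
                   | Some xi => (age C xi).+1 end),
      (cstar C 0 = fun _ => 0) /\
      (forall k i, (1 <= k)%N ->
         let t := node C k in
         cstar C k i =
           (match nd_par t with None => 0 | Some xi => (i == xi)%:R end)
           + ((m (nd_j t))%:R)^-1 * nd_eps t * nd_lam t
               * projE C (nd_a t) (nd_b t) (nd_eta t) i) &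
      (* expansion of e*_eta in the basis (d*_n) *)
      (forall eta k, (eta < k)%N -> dexp C eta k = 0) /\
      (forall eta i, (eta == i)%:R = \sum_(k < eta.+1) dexp C eta k * dstar C k i)].

Definition is_chain (R : Type) (C : Constr R) (s : seq nat) : Prop :=
  [/\ s <> [::], all (fun k => 0 < k)%N s,
      nd_par (node C (head 0%N s)) = None &
      forall i, (i.+1 < size s)%N ->
        nd_par (node C (nth 0%N s i.+1)) = Some (nth 0%N s i)].

Definition neighbours (R : Type) (C : Constr R) (z z' : nat) : Prop :=
  exists s i1 i2, [/\ is_chain C s, (i1 < i2 < size s)%N,
                      nth 0%N s i1 = z & nth 0%N s i2 = z'].

Definition infinite_nat (A : nat -> Prop) : Prop :=
  forall k, exists2 x, (k <= x)%N & A x.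

(* Main.v *)
Require Import Defs.
From HB Require Import structures.
From mathcomp Require Import all_boot all_order all_algebra.
From mathcomp Require Import reals.
From Stdlib Require Import Classical.
Import Order.TTheory GRing.Theory Num.Theory.

Lemma min_ex (P : nat -> Prop) x : P x -> exists y, P y /\ forall z, z < y -> ~ P z.
Proof.
elim: x {-2}x (leqnn x) => [|x IH] y hy Py.
- exists y; split=> // z; move: hy; rewrite leqn0 => /eqP ->; by rewrite ltn0.
- case: (classic (exists z, z < y /\ P z)) => [[z [zy Pz]]|H].
  + apply: (IH z) => //; rewrite -ltnS; exact: leq_trans zy hy.
  + exists y; split=> // z zy Pz; apply: H; by exists z.
Qed.

Lemma pigeon (A : nat -> Prop) (f : nat -> nat) B :
  infinite_nat A -> (forall x, A x -> f x <= B) ->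
  exists v, infinite_nat (fun x => A x /\ f x = v).
Proof.
elim: B A => [|B IH] A hA hB.
- exists 0 => k; have [x kx Ax] := hA k; exists x => //; split=> //.
  apply/eqP; rewrite -leqn0; exact: hB.
- case: (classic (infinite_nat (fun x => A x /\ f x = B.+1))) => [H|H]; first by exists B.+1.
  have [K HK] : exists K, forall x, K <= x -> ~ (A x /\ f x = B.+1).
    apply: NNPP => H1; apply: H => k; apply: NNPP => H2; apply: H1; exists k => x kx Hx.
    by apply: H2; exists x.
  have hA' : infinite_nat (fun x => A x /\ K <= x).
    move=> k; have [x kx Ax] := hA (maxn k K); exists x.
      exact: leq_trans (leq_maxl _ _) kx.
    split => //; exact: leq_trans (leq_maxr _ _) kx.
  have hB' : forall x, A x /\ K <= x -> f x <= B.
    move=> x [Ax Kx]; have := hB x Ax; rewrite leq_eqVlt ltnS => /orP [/eqP e|//].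
    by case: (HK x Kx).
  have [v Hv] := IH _ hA' hB'.
  exists v => k; have [x kx [[Ax _] fx]] := Hv k; by exists x.
Qed.

Lemma find_q (S' : nat -> nat) k : S' 1 = 1 -> (forall q, 1 <= q -> S' q < S' q.+1) ->
  1 <= k -> exists q, [/\ 1 <= q, S' q <= k & k < S' q.+1].
Proof.
move=> S1 Sinc k1.
have Sge : forall q, 1 <= q -> q <= S' q.
  elim=> [//|q IH] _; case: q IH => [|q] IH; first by rewrite S1.
  move: (IH isT) (Sinc q.+1 isT); exact: leq_ltn_trans.
have gen : forall d q0, 1 <= q0 -> S' q0 <= k -> k < S' (q0 + d) ->
    exists q, [/\ 1 <= q, S' q <= k & k < S' q.+1].
  elim=> [|d IH] q0 q01 hq0 hk.
  - by move: hk; rewrite addn0 ltnNge hq0.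
  - case: (ltnP k (S' q0.+1)) => h; first by exists q0.
    apply: (IH q0.+1) => //; by rewrite addSnnS.
apply: (gen k 1) => //; first by rewrite S1.
by rewrite add1n; exact: Sge.
Qed.

Lemma S_strict (R : realType) (m n : nat -> nat) (Net : nat -> seq R) (C : Constr R) :
  nets n Net -> IsConstr m n Net C -> forall q, 1 <= q -> S C q < S C q.+1.
Proof.
move=> Hn HC q q1; case: HC => [[S0 S1 Smon] Hq _ [c0 _] [_ dex]].
have [_ Hsurj _] := Hq q q1.
have [_ _ N1 _ _] := Hn q q1.
have Sq : 0 < S C q.
  rewrite -S1; exact: (homo_leq leqnn (fun _ _ _ => @leq_trans _ _ _) Smon q1).
have d00 : dexp C 0 0 = 1%R.
  have := dex 0 0; rewrite big_ord1 /dstar c0 /= subr0 mulr1 => <- //.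
have : admissible m n Net C q (MkNode q.+1 None 1 0 0 1%R 1%R 0).
  split => //=; first by left.
  - move=> /(congr1 (fun f => f 0)) /= /eqP.
    by rewrite mul1r /projE big_nat1 d00 /dstar c0 /= subr0 mulr1 oner_eq0.
  - by rewrite q1 Sq oner_eq0.
case/Hsurj => k /andP [h1 h2] _; exact: leq_ltn_trans h1 h2.
Qed.

Lemma node_adm (R : realType) (m n : nat -> nat) (Net : nat -> seq R) (C : Constr R) k :
  nets n Net -> IsConstr m n Net C -> 1 <= k ->
  exists q, [/\ 1 <= q, S C q <= k & admissible m n Net C q (node C k)].
Proof.
move=> Hn HC k1.
have Sst := @S_strict _ m _ _ _ Hn HC.
have [[S0 S1 Smon] Hq _ _ _] := HC.
have [q [q1 h1 h2]] := find_q (S C) k S1 Sst k1.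
exists q; split => //.
have [Hadm _ _] := Hq q q1; apply: Hadm; by rewrite h1 h2.
Qed.

Lemma step_par (R : realType) (m n : nat -> nat) (Net : nat -> seq R) (C : Constr R) k xi :
  nets n Net -> IsConstr m n Net C -> 1 <= k -> nd_par (node C k) = Some xi ->
  [/\ xi < k, nd_j (node C xi) = nd_j (node C k) & age C k = (age C xi).+1].
Proof.
move=> Hn HC k1 E.
have [q [q1 Sqk Ha]] := @node_adm _ m _ _ _ k Hn HC k1.
have [[S0 S1 Smon] _ Hage _ _] := HC.
move: Ha; rewrite /admissible; case=> _ _ _ _; rewrite E.
case=> p [[/andP[p1 pq] _ /andP[/andP[_ xiSp] xi1] Hj _] _].
split => //; last by rewrite Hage // E.
apply: (leq_trans xiSp); apply: leq_trans Sqk.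
exact: (homo_leq leqnn (fun _ _ _ => @leq_trans _ _ _) Smon (ltnW pq)).
Qed.

Lemma age_bound (R : realType) (m n l : nat -> nat) (Net : nat -> seq R) (C : Constr R) k :
  params R m n l -> nets n Net -> IsConstr m n Net C -> 1 <= k ->
  age C k <= n (nd_j (node C k)).
Proof.
move=> Hp Hn HC k1.
have [q [q1 Sqk Ha]] := @node_adm _ m _ _ _ k Hn HC k1.
have [[S0 S1 Smon] _ Hage _ _] := HC.
have [Hpos _ _ _ _] := Hp.
rewrite Hage //.
move: Ha; rewrite /admissible; case=> _ _ _ _.
case: (nd_par (node C k)) => [xi|].
- by case=> p [[_ _ _ _ h] _].
- case=> /andP [j1 _] _ _ _ _; by have [_ -> _] := Hpos _ j1.
Qed.

Lemma nb_key (R : realType) (m n : nat -> nat) (Net : nat -> seq R) (C : Constr R) a b :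
  nets n Net -> IsConstr m n Net C -> neighbours C a b ->
  [/\ a < b, nd_j (node C a) = nd_j (node C b) & age C a < age C b].
Proof.
move=> Hn HC [s [i1 [i2 [[_ Hall _ Hpar] /andP [h12 h2s] <- <-]]]].
have pos : forall i, i < size s -> 0 < nth 0 s i by apply/all_nthP.
have st : forall i, i.+1 < size s ->
    [/\ nth 0 s i < nth 0 s i.+1, nd_j (node C (nth 0 s i)) = nd_j (node C (nth 0 s i.+1))
      & age C (nth 0 s i) < age C (nth 0 s i.+1)].
  move=> i hi; have [h1 h2 h3] := @step_par _ m _ _ _ _ _ Hn HC (pos _ hi) (Hpar _ hi).
  by rewrite h3 ltnSn.
have gen : forall d i, i + d.+1 < size s ->
    [/\ nth 0 s i < nth 0 s (i + d.+1), nd_j (node C (nth 0 s i)) = nd_j (node C (nth 0 s (i + d.+1)))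
      & age C (nth 0 s i) < age C (nth 0 s (i + d.+1))].
  elim=> [|d IH] i hi; first by rewrite addn1; apply: st; rewrite -addn1.
  have hi' : i + d.+1 < size s by apply: leq_ltn_trans hi; rewrite leq_add2l.
  have [a1 a2 a3] := IH i hi'.
  have [b1 b2 b3] := st (i + d.+1) (ltac:(by rewrite -addnS)).
  rewrite -addnS in b1 b2 b3.
  split; [exact: ltn_trans b1 | by rewrite a2 | exact: ltn_trans b3].
have := gen (i2 - i1).-1 i1.
rewrite prednK ?subn_gt0 // subnKC ?(ltnW h12) //; apply; exact: h2s.
Qed.

Local Open Scope ring_scope.

Theorem lemma3p2 (R : realType) (m n l : nat -> nat) (Net : nat -> seq R)
    (C : Constr R) :
  params R m n l -> nets n Net -> IsConstr m n Net C ->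
  forall N : nat -> Prop, infinite_nat N ->
  exists M : nat -> Prop,
    [/\ (forall k, M k -> N k), infinite_nat M &
        forall a b, M a -> M b -> ~ neighbours C a b].
Proof.
move=> Hp Hn HC N HN.
have key := fun a b => @nb_key _ m _ _ C a b Hn HC.
pose jd k := nd_j (node C k).
pose N' k := N k /\ (1 <= k)%N.
have HN' : infinite_nat N'.
  move=> k; have [x kx Nx] := HN (maxn k 1); exists x.
    exact: leq_trans (leq_maxl _ _) kx.
  split => //; exact: leq_trans (leq_maxr _ _) kx.
case: (classic (exists j0, infinite_nat (fun k => N' k /\ jd k = j0))) => [[j0 Hj0]|nj].
- have [v Hv] := @pigeon _ (age C) (n j0) Hj0
    (fun x hx => match hx with conj (conj _ x1) e =>
       eq_ind _ (fun j => (age C x <= n j)%N) (@age_bound _ m _ l _ _ x Hp Hn HC x1) _ e end).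
  exists (fun k => (N' k /\ jd k = j0) /\ age C k = v); split.
  + by move=> k [[[]]].
  + exact: Hv.
  + move=> a b [_ ea] [_ eb] /key [_ _]; by rewrite ea eb ltnn.
- have nj' : forall j0, exists K, forall x, (K <= x)%N -> ~ (N' x /\ jd x = j0).
    move=> j0; apply: NNPP => H; apply: nj; exists j0 => k; apply: NNPP => H2.
    apply: H; exists k => x kx Hx; apply: H2; by exists x.
  have avoid : forall (L : seq nat) k, exists x, [/\ (k <= x)%N, N' x & jd x \notin L].
    elim=> [|v L IH] k; first by have [x kx Nx] := HN' k; exists x.
    have [K HK] := nj' v.
    have [x [kx Nx nL]] := IH (maxn k K).
    exists x; split.
    * exact: leq_trans (leq_maxl _ _) kx.
    * exact: Nx.
    * rewrite in_cons negb_or nL andbT; apply/eqP => e.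
      apply: (HK x) => //; exact: leq_trans (leq_maxr _ _) kx.
  exists (fun x => N' x /\ forall y, (y < x)%N -> N' y -> jd y <> jd x); split.
  + by move=> k [[]].
  + move=> k; have [x [kx Nx nL]] := avoid [seq jd y | y <- iota 0 k] k.
    have [y [[Ny ey] ymin]] := @min_ex (fun y => N' y /\ jd y = jd x) x (conj Nx erefl).
    have ky : (k <= y)%N.
      rewrite leqNgt; apply/negP => yk; move: nL; rewrite -ey.
      by apply/negP/negPn/mapP; exists y => //; rewrite mem_iota add0n.
    exists y => //; split => // z zy Nz ez; apply: (ymin z zy); split => //; by rewrite ez.
  + move=> a b [Na _] [_ Hb] /key [ab e _]; exact: (Hb a ab Na e).
Qed.
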